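(* Let $f:M\to\mathbb{R}^3$ be an immersion with eq\''uiaffine transversal vector field $\xi$ and positive definite induced bilinear form $h$, let $(u,v)$ be isothermal coordinates centered at an umbilical point $(0,0)$ with $\lambda_0=b_{11}(0,0)=b_{22}(0,0)\neq0$, and set $q_0=f(0,0)+\lambda_0^{-1}\xi(0,0)$. Let $\nu$ be the co-normal, $p=\nu\cdot(f-q_0)$ the support function, $\mathcal{P}=(p_{uu}-p_{vv},\,2p_{uv})$ and $\mathcal{B}=(b_{11}-b_{22},\,2b_{12})$. Then $$J_1\mathcal{P}(0,0)=\lambda_0^{-1}\delta_0\,J_1\mathcal{B}(0,0),$$ where $J_1$ denotes the $1$-jet at $(0,0)$ and $\delta_0=\delta(0,0)$ with $\delta=[f_u,f_v,\xi][\nu,\nu_u,\nu_v]/\rho$.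
   Context: $D$ is the flat connection of $\mathbb{R}^3$; $h$ and the shape operator $B$ are defined by $D_Xf_*Y=f_*(\nabla_XY)+h(X,Y)\xi$, $D_X\xi=-f_*(BX)+\tau(X)\xi$, eq\''uiaffine meaning $\tau=0$. Isothermal coordinates: $h(\partial_u,\partial_u)=h(\partial_v,\partial_v)=\rho$, $h(\partial_u,\partial_v)=0$. The matrix of $B$ is given by $\xi_u=-b_{11}f_u-b_{21}f_v$, $\xi_v=-b_{12}f_u-b_{22}f_v$ (with $b_{12}=b_{21}$). Umbilical: $B$ a multiple of the identity. The co-normal $\nu$ is defined by $\nu\cdot f_u=\nu\cdot f_v=0$, $\nu\cdot\xi=1$. $[a,b,c]$ is the determinant of three vectors. *)

(* Defs.v *)
From Stdlib Require Import Reals.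
From Coquelicot Require Import Coquelicot.
Open Scope R_scope.

Definition V3 := (R * R * R)%type.
Definition c1 (a : V3) : R := fst (fst a).
Definition c2 (a : V3) : R := snd (fst a).
Definition c3 (a : V3) : R := snd a.
Definition vadd (a b : V3) : V3 := (c1 a + c1 b, c2 a + c2 b, c3 a + c3 b).
Definition vscal (k : R) (a : V3) : V3 := (k * c1 a, k * c2 a, k * c3 a).
Definition vsub (a b : V3) : V3 := vadd a (vscal (-1) b).
Definition dot (a b : V3) : R := c1 a * c1 b + c2 a * c2 b + c3 a * c3 b.
Definition cross (a b : V3) : V3 :=
  (c2 a * c3 b - c3 a * c2 b, c3 a * c1 b - c1 a * c3 b, c1 a * c2 b - c2 a * c1 b).
Definition det3 (a b c : V3) : R := dot a (cross b c).

Definition pu (g : R -> R -> R) (u v : R) : R := Derive (fun t => g t v) u.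
Definition pv (g : R -> R -> R) (u v : R) : R := Derive (fun t => g u t) v.
Definition Pu (F : R -> R -> V3) (u v : R) : V3 :=
  (pu (fun a b => c1 (F a b)) u v, pu (fun a b => c2 (F a b)) u v,
   pu (fun a b => c3 (F a b)) u v).
Definition Pv (F : R -> R -> V3) (u v : R) : V3 :=
  (pv (fun a b => c1 (F a b)) u v, pv (fun a b => c2 (F a b)) u v,
   pv (fun a b => c3 (F a b)) u v).

Fixpoint Ck (k : nat) (g : R -> R -> R) (U : R * R -> Prop) : Prop :=
  (forall z, U z -> continuous (fun w : R * R => g (fst w) (snd w)) z) /\
  match k with
  | O => True
  | S k' =>
      (forall z, U z -> ex_derive (fun t => g t (snd z)) (fst z) /\
                        ex_derive (fun t => g (fst z) t) (snd z)) /\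
      Ck k' (pu g) U /\ Ck k' (pv g) U
  end.
Definition smooth_on (g : R -> R -> R) (U : R * R -> Prop) : Prop :=
  forall k, Ck k g U.
Definition smooth3_on (F : R -> R -> V3) (U : R * R -> Prop) : Prop :=
  smooth_on (fun a b => c1 (F a b)) U /\ smooth_on (fun a b => c2 (F a b)) U /\
  smooth_on (fun a b => c3 (F a b)) U.

(* Main.v *)
Require Import Defs.
From Stdlib Require Import Reals.
From Coquelicot Require Import Coquelicot.
Open Scope R_scope.
Import Defs.
From Stdlib Require Import Lra.


Definition eqU (U : R * R -> Prop) (g h : R -> R -> R) :=
  forall u v, U (u, v) -> g u v = h u v.

Lemma loc2d (U : R * R -> Prop) u v : open U -> U (u, v) ->
  locally_2d (fun a b => U (a, b)) u v.
Proof.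
  intros HU Hz. apply locally_2d_locally.
  apply (@filter_imp (prod_UniformSpace R_UniformSpace R_UniformSpace) _ _ U); [intros [a b]; simpl; auto | now apply HU].
Qed.

Lemma locU_u (U : R * R -> Prop) u v : open U -> U (u, v) -> locally u (fun t => U (t, v)).
Proof. intros; apply locally_2d_1d_const_y with (P := fun a b => U (a,b)); now apply loc2d. Qed.
Lemma locU_v (U : R * R -> Prop) u v : open U -> U (u, v) -> locally v (fun t => U (u, t)).
Proof. intros; apply locally_2d_1d_const_x with (P := fun a b => U (a,b)); now apply loc2d. Qed.

Lemma pu_ext (U : R * R -> Prop) g h : open U -> eqU U g h -> eqU U (pu g) (pu h).
Proof.
  intros HU E u v Hz. unfold pu. apply Derive_ext_loc.
  apply (filter_imp (fun t => U (t, v))); [intros t Ht; exact (E _ _ Ht) | now apply locU_u].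
Qed.
Lemma pv_ext (U : R * R -> Prop) g h : open U -> eqU U g h -> eqU U (pv g) (pv h).
Proof.
  intros HU E u v Hz. unfold pv. apply Derive_ext_loc.
  apply (filter_imp (fun t => U (u, t))); [intros t Ht; exact (E _ _ Ht) | now apply locU_v].
Qed.

Lemma Ck_ext (U : R * R -> Prop) k : open U -> forall g h, eqU U g h -> Ck k g U -> Ck k h U.
Proof.
  intros HU. induction k as [|k IH]; intros g h E [Hc Hk].
  - split; [|exact I]. intros z Hz.
    apply (continuous_ext_loc _ (fun w => g (fst w) (snd w))).
    + apply (filter_imp U); [intros [a b] H; simpl; exact (E a b H) | now apply HU].
    + now apply Hc.
  - destruct Hk as [Hd [H1 H2]]. split; [|split; [|split]].
    + intros z Hz.
      apply (continuous_ext_loc _ (fun w => g (fst w) (snd w))).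
      * apply (filter_imp U); [intros [a b] H; simpl; exact (E a b H) | now apply HU].
      * now apply Hc.
    + intros [u v] Hz. simpl. destruct (Hd (u,v) Hz) as [D1 D2]. simpl in D1, D2. split.
      * apply (ex_derive_ext_loc (fun t => g t v)); [|exact D1].
        apply (filter_imp (fun t => U (t, v))); [intros t Ht; exact (E _ _ Ht) | now apply locU_u].
      * apply (ex_derive_ext_loc (fun t => g u t)); [|exact D2].
        apply (filter_imp (fun t => U (u, t))); [intros t Ht; exact (E _ _ Ht) | now apply locU_v].
    + apply (IH (pu g)); [now apply pu_ext | exact H1].
    + apply (IH (pv g)); [now apply pv_ext | exact H2].
Qed.

Lemma Ck_mono (U : R * R -> Prop) k : forall g, Ck (S k) g U -> Ck k g U.
Proof.
  induction k as [|k IH]; intros g [Hc [Hd [H1 H2]]].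
  - split; [exact Hc | exact I].
  - split; [exact Hc|]. split; [exact Hd|]. split; now apply IH.
Qed.

Lemma Ck_cont (U : R * R -> Prop) k g z : Ck k g U -> U z -> continuous (fun w : R * R => g (fst w) (snd w)) z.
Proof. destruct k; intros [Hc _]; auto. Qed.


Lemma Ck_exu (U : R * R -> Prop) k g u v : Ck (S k) g U -> U (u, v) -> ex_derive (fun t => g t v) u.
Proof. intros [_ [Hd _]] H. exact (proj1 (Hd (u,v) H)). Qed.
Lemma Ck_exv (U : R * R -> Prop) k g u v : Ck (S k) g U -> U (u, v) -> ex_derive (fun t => g u t) v.
Proof. intros [_ [Hd _]] H. exact (proj2 (Hd (u,v) H)). Qed.
Lemma Ck_pu (U : R * R -> Prop) k g : Ck (S k) g U -> Ck k (pu g) U.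
Proof. intros [_ [_ [H _]]]; exact H. Qed.
Lemma Ck_pv (U : R * R -> Prop) k g : Ck (S k) g U -> Ck k (pv g) U.
Proof. intros [_ [_ [_ H]]]; exact H. Qed.

Lemma pu_plus (U : R * R -> Prop) k g h : Ck (S k) g U -> Ck (S k) h U ->
  eqU U (fun u v => pu g u v + pu h u v) (pu (fun u v => g u v + h u v)).
Proof. intros Hg Hh u v H. unfold pu. rewrite Derive_plus; auto.
  - eapply Ck_exu; eauto. - eapply Ck_exu; eauto. Qed.
Lemma pv_plus (U : R * R -> Prop) k g h : Ck (S k) g U -> Ck (S k) h U ->
  eqU U (fun u v => pv g u v + pv h u v) (pv (fun u v => g u v + h u v)).
Proof. intros Hg Hh u v H. unfold pv. rewrite Derive_plus; auto.
  - eapply Ck_exv; eauto. - eapply Ck_exv; eauto. Qed.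
Lemma pu_mult (U : R * R -> Prop) k g h : Ck (S k) g U -> Ck (S k) h U ->
  eqU U (fun u v => pu g u v * h u v + g u v * pu h u v) (pu (fun u v => g u v * h u v)).
Proof. intros Hg Hh u v H. unfold pu. rewrite Derive_mult; auto.
  - eapply Ck_exu; eauto. - eapply Ck_exu; eauto. Qed.
Lemma pv_mult (U : R * R -> Prop) k g h : Ck (S k) g U -> Ck (S k) h U ->
  eqU U (fun u v => pv g u v * h u v + g u v * pv h u v) (pv (fun u v => g u v * h u v)).
Proof. intros Hg Hh u v H. unfold pv. rewrite Derive_mult; auto.
  - eapply Ck_exv; eauto. - eapply Ck_exv; eauto. Qed.
Lemma pu_opp (U : R * R -> Prop) g :
  eqU U (fun u v => - pu g u v) (pu (fun u v => - g u v)).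
Proof. intros u v H. unfold pu. now rewrite Derive_opp. Qed.
Lemma pv_opp (U : R * R -> Prop) g :
  eqU U (fun u v => - pv g u v) (pv (fun u v => - g u v)).
Proof. intros u v H. unfold pv. now rewrite Derive_opp. Qed.
Lemma pu_const (U : R * R -> Prop) c :
  eqU U (fun u v => 0) (pu (fun u v => c)).
Proof. intros u v H. unfold pu. now rewrite Derive_const. Qed.
Lemma pv_const (U : R * R -> Prop) c :
  eqU U (fun u v => 0) (pv (fun u v => c)).
Proof. intros u v H. unfold pv. now rewrite Derive_const. Qed.
Lemma pu_inv (U : R * R -> Prop) k g : Ck (S k) g U -> (forall u v, U (u,v) -> g u v <> 0) ->
  eqU U (fun u v => - (pu g u v * (/ g u v * / g u v))) (pu (fun u v => / g u v)).
Proof. intros Hg Hn u v H. unfold pu. specialize (Hn u v H). rewrite (Derive_inv (fun t => g t v)).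
  - field. exact Hn. - eapply Ck_exu; eauto. - exact Hn. Qed.
Lemma pv_inv (U : R * R -> Prop) k g : Ck (S k) g U -> (forall u v, U (u,v) -> g u v <> 0) ->
  eqU U (fun u v => - (pv g u v * (/ g u v * / g u v))) (pv (fun u v => / g u v)).
Proof. intros Hg Hn u v H. unfold pv. specialize (Hn u v H). rewrite (Derive_inv (fun t => g u t)).
  - field. exact Hn. - eapply Ck_exv; eauto. - exact Hn. Qed.

Lemma cont_plus (g h : R * R -> R) z : continuous g z -> continuous h z ->
  continuous (fun w => g w + h w) z.
Proof. intros; now apply (continuous_plus g h). Qed.
Lemma cont_mult (g h : R * R -> R) z : continuous g z -> continuous h z ->
  continuous (fun w => g w * h w) z.
Proof. intros; now apply (continuous_mult g h). Qed.
Lemma cont_opp (g : R * R -> R) z : continuous g z ->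
  continuous (fun w => - g w) z.
Proof. intros; now apply (continuous_opp g). Qed.
Lemma cont_inv (g : R * R -> R) z : continuous g z -> g z <> 0 ->
  continuous (fun w => / g w) z.
Proof. intros. apply (continuous_comp g Rinv); auto. now apply continuous_Rinv. Qed.
Lemma cont_const (c : R) (z : R * R) : continuous (fun _ : R * R => c) z.
Proof. apply continuous_const. Qed.
Lemma exd_plus (f g : R -> R) x : ex_derive f x -> ex_derive g x -> ex_derive (fun t => f t + g t) x.
Proof. intros; now apply (ex_derive_plus f g). Qed.
Lemma exd_opp (f : R -> R) x : ex_derive f x -> ex_derive (fun t => - f t) x.
Proof. intros; now apply (ex_derive_opp f). Qed.
Lemma exd_const (c x : R) : ex_derive (fun _ : R => c) x.
Proof. apply (ex_derive_const (K := R_AbsRing) (V := R_NormedModule)). Qed.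


Lemma Ck_const (U : R * R -> Prop) k : open U -> forall c, Ck k (fun _ _ => c) U.
Proof.
  intros HU. induction k as [|k IH]; intros c; split.
  - intros; apply cont_const.
  - exact I.
  - intros; apply cont_const.
  - split; [intros; split; apply exd_const|].
    split; eapply Ck_ext; [exact HU| apply pu_const | apply IH | exact HU | apply pv_const | apply IH].
Qed.

Lemma Ck_plus (U : R * R -> Prop) k : open U -> forall g h, Ck k g U -> Ck k h U ->
  Ck k (fun u v => g u v + h u v) U.
Proof.
  intros HU. induction k as [|k IH]; intros g h Hg Hh; split.
  - intros z Hz; apply cont_plus; eapply Ck_cont; eauto.
  - exact I.
  - intros z Hz; apply cont_plus; eapply Ck_cont; eauto.
  - split; [|split].
    + intros [u v] Hz; simpl; split; apply exd_plus.
      * eapply Ck_exu; eauto. * eapply Ck_exu; eauto.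
      * eapply Ck_exv; eauto. * eapply Ck_exv; eauto.
    + eapply Ck_ext; [exact HU| eapply pu_plus; eauto | ].
      apply IH; apply Ck_pu; auto.
    + eapply Ck_ext; [exact HU| eapply pv_plus; eauto | ].
      apply IH; apply Ck_pv; auto.
Qed.

Lemma Ck_opp (U : R * R -> Prop) k : open U -> forall g, Ck k g U ->
  Ck k (fun u v => - g u v) U.
Proof.
  intros HU. induction k as [|k IH]; intros g Hg; split.
  - intros z Hz; apply cont_opp; eapply Ck_cont; eauto.
  - exact I.
  - intros z Hz; apply cont_opp; eapply Ck_cont; eauto.
  - split; [|split].
    + intros [u v] Hz; simpl; split; apply exd_opp.
      * eapply Ck_exu; eauto. * eapply Ck_exv; eauto.
    + eapply Ck_ext; [exact HU| apply pu_opp | ].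
      apply IH; apply Ck_pu; auto.
    + eapply Ck_ext; [exact HU| apply pv_opp | ].
      apply IH; apply Ck_pv; auto.
Qed.

Lemma Ck_mult (U : R * R -> Prop) k : open U -> forall g h, Ck k g U -> Ck k h U ->
  Ck k (fun u v => g u v * h u v) U.
Proof.
  intros HU. induction k as [|k IH]; intros g h Hg Hh; split.
  - intros z Hz; apply cont_mult; eapply Ck_cont; eauto.
  - exact I.
  - intros z Hz; apply cont_mult; eapply Ck_cont; eauto.
  - split; [|split].
    + intros [u v] Hz; simpl; split; apply ex_derive_mult.
      * eapply Ck_exu; eauto. * eapply Ck_exu; eauto.
      * eapply Ck_exv; eauto. * eapply Ck_exv; eauto.
    + eapply Ck_ext; [exact HU| eapply pu_mult; eauto | ].
      apply Ck_plus; auto; apply IH; auto using Ck_pu, Ck_mono.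
    + eapply Ck_ext; [exact HU| eapply pv_mult; eauto | ].
      apply Ck_plus; auto; apply IH; auto using Ck_pv, Ck_mono.
Qed.

Lemma Ck_inv (U : R * R -> Prop) k : open U -> forall g, Ck k g U ->
  (forall u v, U (u, v) -> g u v <> 0) ->
  Ck k (fun u v => / g u v) U.
Proof.
  intros HU. induction k as [|k IH]; intros g Hg Hn; split.
  - intros [u v] Hz; apply cont_inv; [eapply Ck_cont; eauto | now apply Hn].
  - exact I.
  - intros [u v] Hz; apply cont_inv; [eapply Ck_cont; eauto | now apply Hn].
  - split; [|split].
    + intros [u v] Hz; simpl; split; apply ex_derive_inv.
      * eapply Ck_exu; eauto. * now apply Hn. * eapply Ck_exv; eauto. * now apply Hn.
    + eapply Ck_ext; [exact HU| eapply pu_inv; eauto | ].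
      apply Ck_opp; [exact HU|]. apply Ck_mult; [exact HU| apply Ck_pu; exact Hg |]. apply Ck_mult; [exact HU| |]; apply IH; auto using Ck_mono.
    + eapply Ck_ext; [exact HU| eapply pv_inv; eauto | ].
      apply Ck_opp; [exact HU|]. apply Ck_mult; [exact HU| apply Ck_pv; exact Hg |]. apply Ck_mult; [exact HU| |]; apply IH; auto using Ck_mono.
Qed.


Definition Sm (U : R * R -> Prop) g := forall k, Ck k g U.

Lemma cont2d g x y : continuous (fun w : R * R => g (fst w) (snd w)) (x, y) -> continuity_2d_pt g x y.
Proof.
  intros H eps. apply locally_2d_locally.
  apply (H (fun r => Rabs (r - g x y) < eps)). exists eps. intros r Hr. exact Hr.
Qed.

Lemma Sm_schwarz (U : R * R -> Prop) g : open U -> Sm U g -> eqU U (pu (pv g)) (pv (pu g)).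
Proof.
  intros HU Hg u v Hz. unfold pu, pv. apply Schwarz.
  - apply (locally_2d_impl (fun a b => U (a, b))); [|now apply loc2d].
    apply locally_2d_forall. intros a b Hab. split; [|split; [|split]].
    + apply (Ck_exu U 0 g); auto.
    + apply (Ck_exv U 0 g); auto.
    + apply (Ck_exu U 0 (pv g)); auto. apply Ck_pv. apply Hg.
    + apply (Ck_exv U 0 (pu g)); auto. apply Ck_pu. apply Hg.
  - apply cont2d. apply (Ck_cont U 0 (pu (pv g))); auto. apply Ck_pu, Ck_pv, Hg.
  - apply cont2d. apply (Ck_cont U 0 (pv (pu g))); auto. apply Ck_pv, Ck_pu, Hg.
Qed.

Section SmLemmas.
Variable U : R * R -> Prop.
Hypothesis HU : open U.

Lemma Sm_ext g h : eqU U g h -> Sm U g -> Sm U h.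
Proof. intros E Hg k. eapply Ck_ext; eauto. Qed.
Lemma Sm_pu g : Sm U g -> Sm U (pu g).
Proof. intros Hg k. apply Ck_pu, Hg. Qed.
Lemma Sm_pv g : Sm U g -> Sm U (pv g).
Proof. intros Hg k. apply Ck_pv, Hg. Qed.
Lemma Sm_const c : Sm U (fun _ _ => c).
Proof. intros k. now apply Ck_const. Qed.
Lemma Sm_plus g h : Sm U g -> Sm U h -> Sm U (fun u v => g u v + h u v).
Proof. intros Hg Hh k. now apply Ck_plus. Qed.
Lemma Sm_opp g : Sm U g -> Sm U (fun u v => - g u v).
Proof. intros Hg k. now apply Ck_opp. Qed.
Lemma Sm_minus g h : Sm U g -> Sm U h -> Sm U (fun u v => g u v - h u v).
Proof. intros Hg Hh. apply Sm_plus; auto. now apply Sm_opp. Qed.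
Lemma Sm_mult g h : Sm U g -> Sm U h -> Sm U (fun u v => g u v * h u v).
Proof. intros Hg Hh k. now apply Ck_mult. Qed.
Lemma Sm_inv g : Sm U g -> (forall u v, U (u, v) -> g u v <> 0) -> Sm U (fun u v => / g u v).
Proof. intros Hg Hn k. now apply Ck_inv. Qed.
Lemma Sm_exu g u v : Sm U g -> U (u, v) -> ex_derive (fun t => g t v) u.
Proof. intros Hg H. apply (Ck_exu U 0 g); auto. Qed.
Lemma Sm_exv g u v : Sm U g -> U (u, v) -> ex_derive (fun t => g u t) v.
Proof. intros Hg H. apply (Ck_exv U 0 g); auto. Qed.

Definition Sm3 (W : R -> R -> V3) :=
  Sm U (fun a b => c1 (W a b)) /\ Sm U (fun a b => c2 (W a b)) /\ Sm U (fun a b => c3 (W a b)).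

Lemma Sm3_Pu W : Sm3 W -> Sm3 (Pu W).
Proof. intros [H1 [H2 H3]]. split; [|split]; apply Sm_pu; assumption. Qed.
Lemma Sm3_Pv W : Sm3 W -> Sm3 (Pv W).
Proof. intros [H1 [H2 H3]]. split; [|split]; apply Sm_pv; assumption. Qed.

Lemma Sm_dot A B : Sm3 A -> Sm3 B -> Sm U (fun a b => dot (A a b) (B a b)).
Proof.
  intros [A1 [A2 A3]] [B1 [B2 B3]]. unfold dot.
  repeat apply Sm_plus; apply Sm_mult; assumption.
Qed.

Lemma Sm3_cross A B : Sm3 A -> Sm3 B -> Sm3 (fun a b => cross (A a b) (B a b)).
Proof.
  intros [A1 [A2 A3]] [B1 [B2 B3]]. unfold cross, c1, c2, c3 in *; simpl.
  split; [|split]; apply Sm_minus; apply Sm_mult; assumption.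
Qed.

Lemma Sm3_scal g A : Sm U g -> Sm3 A -> Sm3 (fun a b => vscal (g a b) (A a b)).
Proof.
  intros Hg [A1 [A2 A3]]. unfold vscal, c1, c2, c3 in *; simpl.
  split; [|split]; apply Sm_mult; assumption.
Qed.

Lemma Sm3_ext A B : (forall u v, U (u, v) -> A u v = B u v) -> Sm3 A -> Sm3 B.
Proof.
  intros E [A1 [A2 A3]]. split; [|split].
  - apply (Sm_ext _ _ (fun u v H => f_equal c1 (E u v H)) A1).
  - apply (Sm_ext _ _ (fun u v H => f_equal c2 (E u v H)) A2).
  - apply (Sm_ext _ _ (fun u v H => f_equal c3 (E u v H)) A3).
Qed.

Ltac exd := repeat first [ apply exd_plus | apply ex_derive_mult | apply exd_opp
  | apply exd_const | (apply Sm_exu; [assumption|assumption]) | (apply Sm_exv; [assumption|assumption]) ].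

Lemma Derive_dot1 (a1 a2 a3 b1 b2 b3 : R -> R) u :
  ex_derive a1 u -> ex_derive a2 u -> ex_derive a3 u ->
  ex_derive b1 u -> ex_derive b2 u -> ex_derive b3 u ->
  Derive (fun t => a1 t * b1 t + a2 t * b2 t + a3 t * b3 t) u =
    Derive a1 u * b1 u + Derive a2 u * b2 u + Derive a3 u * b3 u +
    (a1 u * Derive b1 u + a2 u * Derive b2 u + a3 u * Derive b3 u).
Proof.
  intros E1 E2 E3 F1 F2 F3.
  rewrite (Derive_plus (fun t => a1 t * b1 t + a2 t * b2 t) (fun t => a3 t * b3 t)).
  rewrite (Derive_plus (fun t => a1 t * b1 t) (fun t => a2 t * b2 t)).
  rewrite (Derive_mult a1 b1), (Derive_mult a2 b2), (Derive_mult a3 b3) by auto.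
  ring.
  all: auto using ex_derive_mult, exd_plus.
Qed.

Lemma pu_dot A B : Sm3 A -> Sm3 B ->
  eqU U (pu (fun a b => dot (A a b) (B a b)))
        (fun a b => dot (Pu A a b) (B a b) + dot (A a b) (Pu B a b)).
Proof.
  intros [A1 [A2 A3]] [B1 [B2 B3]] u v H. unfold dot, Pu, pu. simpl.
  set (a1 := fun t => c1 (A t v)); set (a2 := fun t => c2 (A t v)); set (a3 := fun t => c3 (A t v)).
  set (b1 := fun t => c1 (B t v)); set (b2 := fun t => c2 (B t v)); set (b3 := fun t => c3 (B t v)).
  change (Derive (fun t => a1 t * b1 t + a2 t * b2 t + a3 t * b3 t) u =
    Derive a1 u * b1 u + Derive a2 u * b2 u + Derive a3 u * b3 u +
    (a1 u * Derive b1 u + a2 u * Derive b2 u + a3 u * Derive b3 u)).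
  apply Derive_dot1.
  - apply (Sm_exu (fun a b => c1 (A a b))); auto.
  - apply (Sm_exu (fun a b => c2 (A a b))); auto.
  - apply (Sm_exu (fun a b => c3 (A a b))); auto.
  - apply (Sm_exu (fun a b => c1 (B a b))); auto.
  - apply (Sm_exu (fun a b => c2 (B a b))); auto.
  - apply (Sm_exu (fun a b => c3 (B a b))); auto.
Qed.
Lemma pv_dot A B : Sm3 A -> Sm3 B ->
  eqU U (pv (fun a b => dot (A a b) (B a b)))
        (fun a b => dot (Pv A a b) (B a b) + dot (A a b) (Pv B a b)).
Proof.
  intros [A1 [A2 A3]] [B1 [B2 B3]] u v H. unfold dot, Pv, pv. simpl.
  set (a1 := fun t => c1 (A u t)); set (a2 := fun t => c2 (A u t)); set (a3 := fun t => c3 (A u t)).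
  set (b1 := fun t => c1 (B u t)); set (b2 := fun t => c2 (B u t)); set (b3 := fun t => c3 (B u t)).
  change (Derive (fun t => a1 t * b1 t + a2 t * b2 t + a3 t * b3 t) v =
    Derive a1 v * b1 v + Derive a2 v * b2 v + Derive a3 v * b3 v +
    (a1 v * Derive b1 v + a2 v * Derive b2 v + a3 v * Derive b3 v)).
  apply Derive_dot1.
  - apply (Sm_exv (fun a b => c1 (A a b))); auto.
  - apply (Sm_exv (fun a b => c2 (A a b))); auto.
  - apply (Sm_exv (fun a b => c3 (A a b))); auto.
  - apply (Sm_exv (fun a b => c1 (B a b))); auto.
  - apply (Sm_exv (fun a b => c2 (B a b))); auto.
  - apply (Sm_exv (fun a b => c3 (B a b))); auto.
Qed.
End SmLemmas.


Lemma dot_lin2 n x y a b : dot n (vadd (vscal a x) (vscal b y)) = a * dot n x + b * dot n y.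
Proof. destruct n as [[? ?] ?], x as [[? ?] ?], y as [[? ?] ?]. unfold dot, vadd, vscal, c1, c2, c3; simpl; ring. Qed.
Lemma dot_lin3 n x y z a b r : dot n (vadd (vadd (vscal a x) (vscal b y)) (vscal r z)) = a * dot n x + b * dot n y + r * dot n z.
Proof. destruct n as [[? ?] ?], x as [[? ?] ?], y as [[? ?] ?], z as [[? ?] ?]. unfold dot, vadd, vscal, c1, c2, c3; simpl; ring. Qed.
Lemma dot_lin2' n x y a b : dot (vadd (vscal a x) (vscal b y)) n = a * dot x n + b * dot y n.
Proof. destruct n as [[? ?] ?], x as [[? ?] ?], y as [[? ?] ?]. unfold dot, vadd, vscal, c1, c2, c3; simpl; ring. Qed.

Lemma coef1 (x y z : V3) (b c : R) : det3 x y z <> 0 ->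
  b = - dot (vadd (vscal (-b) x) (vscal (-c) y)) (cross y z) * / det3 x y z.
Proof. destruct x as [[? ?] ?], y as [[? ?] ?], z as [[? ?] ?]. unfold det3, dot, cross, vadd, vscal, c1, c2, c3; simpl.
  intros H. field. exact H. Qed.
Lemma coef2 (x y z : V3) (b c : R) : det3 x y z <> 0 ->
  c = - dot (vadd (vscal (-b) x) (vscal (-c) y)) (cross z x) * / det3 x y z.
Proof. destruct x as [[? ?] ?], y as [[? ?] ?], z as [[? ?] ?]. unfold det3, dot, cross, vadd, vscal, c1, c2, c3; simpl.
  intros H. field. exact H. Qed.

Lemma solve_nu (n a b c : V3) : dot n a = 0 -> dot n b = 0 -> dot n c = 1 -> det3 a b c <> 0 ->
  n = vscal (/ det3 a b c) (cross a b).
Proof.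
  destruct n as [[n1 n2] n3], a as [[a1 a2] a3], b as [[b1 b2] b3], c as [[x1 x2] x3].
  unfold det3, dot, cross, vscal, c1, c2, c3; simpl. intros H1 H2 H3 H.
  set (D := a1 * (b2 * x3 - b3 * x2) + a2 * (b3 * x1 - b1 * x3) + a3 * (b1 * x2 - b2 * x1)) in *.
  assert (K1 : D * n1 = a2 * b3 - a3 * b2).
  { transitivity ((n1 * a1 + n2 * a2 + n3 * a3) * (b2 * x3 - b3 * x2) + (n1 * b1 + n2 * b2 + n3 * b3) * (x2 * a3 - x3 * a2) + (n1 * x1 + n2 * x2 + n3 * x3) * (a2 * b3 - a3 * b2)).
    unfold D; ring. rewrite H1, H2, H3; ring. }
  assert (K2 : D * n2 = a3 * b1 - a1 * b3).
  { transitivity ((n1 * a1 + n2 * a2 + n3 * a3) * (b3 * x1 - b1 * x3) + (n1 * b1 + n2 * b2 + n3 * b3) * (x3 * a1 - x1 * a3) + (n1 * x1 + n2 * x2 + n3 * x3) * (a3 * b1 - a1 * b3)).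
    unfold D; ring. rewrite H1, H2, H3; ring. }
  assert (K3 : D * n3 = a1 * b2 - a2 * b1).
  { transitivity ((n1 * a1 + n2 * a2 + n3 * a3) * (b1 * x2 - b2 * x1) + (n1 * b1 + n2 * b2 + n3 * b3) * (x1 * a2 - x2 * a1) + (n1 * x1 + n2 * x2 + n3 * x3) * (a1 * b2 - a2 * b1)).
    unfold D; ring. rewrite H1, H2, H3; ring. }
  rewrite <- K1, <- K2, <- K3. f_equal; [f_equal|]; field; exact H.
Qed.

Lemma gram (a b c x y z : V3) : det3 a b c * det3 x y z =
  dot x a * (dot y b * dot z c - dot y c * dot z b)
  - dot x b * (dot y a * dot z c - dot y c * dot z a)
  + dot x c * (dot y a * dot z b - dot y b * dot z a).
Proof. destruct a as [[? ?] ?], b as [[? ?] ?], c as [[? ?] ?], x as [[? ?] ?], y as [[? ?] ?], z as [[? ?] ?].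
  unfold det3, dot, cross, c1, c2, c3; simpl. ring. Qed.

Lemma dot_F0 (X f0 x0 : V3) (l : R) : l <> 0 ->
  dot X (vsub f0 (vadd f0 (vscal (/ l) x0))) = - / l * dot X x0.
Proof. destruct X as [[? ?] ?], f0 as [[? ?] ?], x0 as [[? ?] ?]. unfold vsub, dot, vadd, vscal, c1, c2, c3; simpl.
  intros; ring. Qed.


Section Vec.
Variable U : R * R -> Prop.
Hypothesis HU : open U.

Lemma vec_schwarz W u v : Sm3 U W -> U (u, v) -> Pu (Pv W) u v = Pv (Pu W) u v.
Proof.
  intros [W1 [W2 W3]] H. unfold Pu at 1. unfold Pv at 2.
  change ((pu (pv (fun a b => c1 (W a b))) u v, pu (pv (fun a b => c2 (W a b))) u v,
          pu (pv (fun a b => c3 (W a b))) u v) =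
          (pv (pu (fun a b => c1 (W a b))) u v, pv (pu (fun a b => c2 (W a b))) u v,
          pv (pu (fun a b => c3 (W a b))) u v)).
  rewrite (Sm_schwarz U _ HU W1 u v H), (Sm_schwarz U _ HU W2 u v H), (Sm_schwarz U _ HU W3 u v H).
  reflexivity.
Qed.

Lemma Sm3_sub_const W q : Sm3 U W -> Sm3 U (fun a b => vsub (W a b) q).
Proof.
  intros [W1 [W2 W3]]. unfold vsub, vadd, vscal. unfold Sm3. simpl.
  split; [|split]; apply Sm_plus; auto; apply Sm_const; auto.
Qed.

Lemma Derive_plus_const (g : R -> R) k x : ex_derive g x -> Derive (fun t => g t + k) x = Derive g x.
Proof. intros Hg. rewrite (Derive_plus g (fun _ => k)); [|exact Hg|apply exd_const].
  rewrite Derive_const. apply Rplus_0_r. Qed.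

Lemma Pu_sub_const W q u v : Sm3 U W -> U (u, v) -> Pu (fun a b => vsub (W a b) q) u v = Pu W u v.
Proof.
  intros [W1 [W2 W3]] H. unfold Pu, pu.
  rewrite (Derive_ext (fun t => c1 (vsub (W t v) q)) (fun t => c1 (W t v) + -1 * c1 q)) by (intros; reflexivity).
  rewrite (Derive_ext (fun t => c2 (vsub (W t v) q)) (fun t => c2 (W t v) + -1 * c2 q)) by (intros; reflexivity).
  rewrite (Derive_ext (fun t => c3 (vsub (W t v) q)) (fun t => c3 (W t v) + -1 * c3 q)) by (intros; reflexivity).
  rewrite !Derive_plus_const; auto.
  - apply (Sm_exu U (fun a b => c3 (W a b))); auto.
  - apply (Sm_exu U (fun a b => c2 (W a b))); auto.
  - apply (Sm_exu U (fun a b => c1 (W a b))); auto.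
Qed.
Lemma Pv_sub_const W q u v : Sm3 U W -> U (u, v) -> Pv (fun a b => vsub (W a b) q) u v = Pv W u v.
Proof.
  intros [W1 [W2 W3]] H. unfold Pv, pv.
  rewrite (Derive_ext (fun t => c1 (vsub (W u t) q)) (fun t => c1 (W u t) + -1 * c1 q)) by (intros; reflexivity).
  rewrite (Derive_ext (fun t => c2 (vsub (W u t) q)) (fun t => c2 (W u t) + -1 * c2 q)) by (intros; reflexivity).
  rewrite (Derive_ext (fun t => c3 (vsub (W u t) q)) (fun t => c3 (W u t) + -1 * c3 q)) by (intros; reflexivity).
  rewrite !Derive_plus_const; auto.
  - apply (Sm_exv U (fun a b => c3 (W a b))); auto.
  - apply (Sm_exv U (fun a b => c2 (W a b))); auto.
  - apply (Sm_exv U (fun a b => c1 (W a b))); auto.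
Qed.

Lemma diff_u A B g u v : Sm3 U A -> Sm3 U B -> eqU U (fun a b => dot (A a b) (B a b)) g -> U (u, v) ->
  dot (Pu A u v) (B u v) + dot (A u v) (Pu B u v) = pu g u v.
Proof.
  intros HA HB E H. rewrite <- (pu_ext U _ _ HU E u v H). symmetry. exact (pu_dot U A B HA HB u v H).
Qed.
Lemma diff_v A B g u v : Sm3 U A -> Sm3 U B -> eqU U (fun a b => dot (A a b) (B a b)) g -> U (u, v) ->
  dot (Pv A u v) (B u v) + dot (A u v) (Pv B u v) = pv g u v.
Proof.
  intros HA HB E H. rewrite <- (pv_ext U _ _ HU E u v H). symmetry. exact (pv_dot U A B HA HB u v H).
Qed.

Lemma pu_c u v c : pu (fun _ _ => c) u v = 0.
Proof. unfold pu. apply Derive_const. Qed.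
Lemma pv_c u v c : pv (fun _ _ => c) u v = 0.
Proof. unfold pv. apply Derive_const. Qed.
Lemma pu_oppf g u v : pu (fun a b => - g a b) u v = - pu g u v.
Proof. unfold pu. apply Derive_opp. Qed.
Lemma pv_oppf g u v : pv (fun a b => - g a b) u v = - pv g u v.
Proof. unfold pv. apply Derive_opp. Qed.
Lemma pu_multf g h u v : Sm U g -> Sm U h -> U (u, v) ->
  pu (fun a b => g a b * h a b) u v = pu g u v * h u v + g u v * pu h u v.
Proof. intros Hg Hh H. unfold pu. exact (Derive_mult (fun t => g t v) (fun t => h t v) u (Sm_exu U g u v Hg H) (Sm_exu U h u v Hh H)). Qed.
Lemma pv_multf g h u v : Sm U g -> Sm U h -> U (u, v) ->
  pv (fun a b => g a b * h a b) u v = pv g u v * h u v + g u v * pv h u v.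
Proof. intros Hg Hh H. unfold pv. exact (Derive_mult (fun t => g u t) (fun t => h u t) v (Sm_exv U g u v Hg H) (Sm_exv U h u v Hh H)). Qed.
Lemma pu_minusf g h u v : Sm U g -> Sm U h -> U (u, v) ->
  pu (fun a b => g a b - h a b) u v = pu g u v - pu h u v.
Proof. intros Hg Hh H. unfold pu. exact (Derive_minus (fun t => g t v) (fun t => h t v) u (Sm_exu U g u v Hg H) (Sm_exu U h u v Hh H)). Qed.
Lemma pv_minusf g h u v : Sm U g -> Sm U h -> U (u, v) ->
  pv (fun a b => g a b - h a b) u v = pv g u v - pv h u v.
Proof. intros Hg Hh H. unfold pv. exact (Derive_minus (fun t => g u t) (fun t => h u t) v (Sm_exv U g u v Hg H) (Sm_exv U h u v Hh H)). Qed.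
Lemma pu_scalf (k : R) g u v : pu (fun a b => k * g a b) u v = k * pu g u v.
Proof. unfold pu. apply Derive_scal. Qed.
Lemma pv_scalf (k : R) g u v : pv (fun a b => k * g a b) u v = k * pv g u v.
Proof. unfold pv. apply Derive_scal. Qed.

End Vec.


Lemma solveX (X l Y Z : R) : X + - l * Y = Z -> X = Z + l * Y.
Proof. intros; lra. Qed.

Theorem proposition4p2
  (U : R * R -> Prop) (f xi nu : R -> R -> V3)
  (rho b11 b12 b21 b22 : R -> R -> R) :
  (* coordinate domain: open, containing the centre (0,0) *)
  open U -> U (0, 0) ->
  smooth3_on f U -> smooth3_on xi U ->
  (* f is an immersion and xi is transversal *)
  (forall u v, U (u, v) -> cross (Pu f u v) (Pv f u v) <> (0, 0, 0)) ->
  (forall u v, U (u, v) -> det3 (Pu f u v) (Pv f u v) (xi u v) <> 0) ->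
  (* h positive definite, isothermal: h11 = h22 = rho > 0, h12 = 0
     (Gauss formula D_X f_* Y = f_*(nabla_X Y) + h(X,Y) xi in coordinates) *)
  (forall u v, U (u, v) -> 0 < rho u v) ->
  (forall u v, U (u, v) -> exists a b,
     Pu (Pu f) u v = vadd (vadd (vscal a (Pu f u v)) (vscal b (Pv f u v)))
                          (vscal (rho u v) (xi u v))) ->
  (forall u v, U (u, v) -> exists a b,
     Pv (Pv f) u v = vadd (vadd (vscal a (Pu f u v)) (vscal b (Pv f u v)))
                          (vscal (rho u v) (xi u v))) ->
  (forall u v, U (u, v) -> exists a b,
     Pv (Pu f) u v = vadd (vscal a (Pu f u v)) (vscal b (Pv f u v))) ->
  (* equiaffine (tau = 0) with shape operator B = (b_ij) *)
  (forall u v, U (u, v) ->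
     Pu xi u v = vadd (vscal (- b11 u v) (Pu f u v)) (vscal (- b21 u v) (Pv f u v))) ->
  (forall u v, U (u, v) ->
     Pv xi u v = vadd (vscal (- b12 u v) (Pu f u v)) (vscal (- b22 u v) (Pv f u v))) ->
  (* co-normal *)
  (forall u v, U (u, v) ->
     dot (nu u v) (Pu f u v) = 0 /\ dot (nu u v) (Pv f u v) = 0 /\
     dot (nu u v) (xi u v) = 1) ->
  (* (0,0) is umbilical with lambda0 = b11(0,0) = b22(0,0) <> 0 *)
  b12 0 0 = 0 -> b21 0 0 = 0 -> b11 0 0 = b22 0 0 -> b11 0 0 <> 0 ->
  let lam0 := b11 0 0 in
  let q0 := vadd (f 0 0) (vscal (/ lam0) (xi 0 0)) in
  let p := fun u v => dot (nu u v) (vsub (f u v) q0) in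
  let P1 := fun u v => pu (pu p) u v - pv (pv p) u v in
  let P2 := fun u v => 2 * pv (pu p) u v in
  let B1 := fun u v => b11 u v - b22 u v in
  let B2 := fun u v => 2 * b12 u v in
  let delta0 := det3 (Pu f 0 0) (Pv f 0 0) (xi 0 0)
                * det3 (nu 0 0) (Pu nu 0 0) (Pv nu 0 0) / rho 0 0 in
  let c := / lam0 * delta0 in
  (* equality of 1-jets at (0,0): values and first partial derivatives *)
  P1 0 0 = c * B1 0 0 /\ P2 0 0 = c * B2 0 0 /\
  pu P1 0 0 = c * pu B1 0 0 /\ pv P1 0 0 = c * pv B1 0 0 /\
  pu P2 0 0 = c * pu B2 0 0 /\ pv P2 0 0 = c * pv B2 0 0.
Proof.
  intros HU H0 Hf Hxi Himm Hdet Hrho Gu Gv Guv Wu Wv Hnu b12_0 b21_0 b11_22 lam_ne.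
  intros lam0 q0 p P1 P2 B1 B2 delta0 c.
  assert (Sf : Sm3 U f) by exact Hf. assert (Sxi : Sm3 U xi) by exact Hxi.
  assert (Se1 : Sm3 U (Pu f)) by (apply Sm3_Pu; exact Sf).
  assert (Se2 : Sm3 U (Pv f)) by (apply Sm3_Pv; exact Sf).
  assert (Se11 : Sm3 U (Pu (Pu f))) by (apply Sm3_Pu; exact Se1).
  assert (Sxu : Sm3 U (Pu xi)) by (apply Sm3_Pu; exact Sxi).
  assert (Sxv : Sm3 U (Pv xi)) by (apply Sm3_Pv; exact Sxi).
  assert (SD : Sm U (fun a b => det3 (Pu f a b) (Pv f a b) (xi a b))).
  { unfold det3. apply (Sm_dot U HU (Pu f) (fun a b => cross (Pv f a b) (xi a b))); auto.
    apply Sm3_cross; auto. }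
  assert (Snu : Sm3 U nu).
  { apply (Sm3_ext U HU (fun a b => vscal (/ det3 (Pu f a b) (Pv f a b) (xi a b)) (cross (Pu f a b) (Pv f a b)))).
    - intros u v H. destruct (Hnu u v H) as [N1 [N2 N3]]. symmetry. apply solve_nu; auto.
    - apply Sm3_scal; auto. apply Sm_inv; auto. apply Sm3_cross; auto. }
  assert (SN1 : Sm3 U (Pu nu)) by (apply Sm3_Pu; auto).
  assert (SN2 : Sm3 U (Pv nu)) by (apply Sm3_Pv; auto).
  assert (SN11 : Sm3 U (Pu (Pu nu))) by (apply Sm3_Pu; auto).
  assert (SN22 : Sm3 U (Pv (Pv nu))) by (apply Sm3_Pv; auto).
  assert (SN12 : Sm3 U (Pv (Pu nu))) by (apply Sm3_Pv; auto).
  assert (SF : Sm3 U (fun a b => vsub (f a b) q0)) by (apply Sm3_sub_const; auto).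
  assert (K1 : forall u v, U (u, v) -> dot (Pu nu u v) (Pu f u v) = - rho u v).
  { intros u v H. 
    pose proof (diff_u U HU nu (Pu f) (fun _ _ => 0) u v Snu Se1 (fun a b Hab => proj1 (Hnu a b Hab)) H) as E.
    rewrite pu_c in E. destruct (Gu u v H) as [a [b G]]. rewrite G, dot_lin3 in E.
    destruct (Hnu u v H) as [N1 [N2 N3]]. rewrite N1, N2, N3 in E. lra. }
  assert (K2 : forall u v, U (u, v) -> dot (Pv nu u v) (Pu f u v) = 0).
  { intros u v H. 
    pose proof (diff_v U HU nu (Pu f) (fun _ _ => 0) u v Snu Se1 (fun a b Hab => proj1 (Hnu a b Hab)) H) as E.
    rewrite pv_c in E. destruct (Guv u v H) as [a [b G]]. rewrite G, dot_lin2 in E.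
    destruct (Hnu u v H) as [N1 [N2 N3]]. rewrite N1, N2 in E. lra. }
  assert (K3 : forall u v, U (u, v) -> dot (Pu nu u v) (Pv f u v) = 0).
  { intros u v H. 
    pose proof (diff_u U HU nu (Pv f) (fun _ _ => 0) u v Snu Se2 (fun a b Hab => proj1 (proj2 (Hnu a b Hab))) H) as E.
    rewrite pu_c in E. rewrite (vec_schwarz U HU f u v Sf H) in E.
    destruct (Guv u v H) as [a [b G]]. rewrite G, dot_lin2 in E.
    destruct (Hnu u v H) as [N1 [N2 N3]]. rewrite N1, N2 in E. lra. }
  assert (K4 : forall u v, U (u, v) -> dot (Pv nu u v) (Pv f u v) = - rho u v).
  { intros u v H. 
    pose proof (diff_v U HU nu (Pv f) (fun _ _ => 0) u v Snu Se2 (fun a b Hab => proj1 (proj2 (Hnu a b Hab))) H) as E.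
    rewrite pv_c in E. destruct (Gv u v H) as [a [b G]]. rewrite G, dot_lin3 in E.
    destruct (Hnu u v H) as [N1 [N2 N3]]. rewrite N1, N2, N3 in E. lra. }
  assert (K5 : forall u v, U (u, v) -> dot (Pu nu u v) (xi u v) = 0).
  { intros u v H. 
    pose proof (diff_u U HU nu xi (fun _ _ => 1) u v Snu Sxi (fun a b Hab => proj2 (proj2 (Hnu a b Hab))) H) as E.
    rewrite pu_c in E. rewrite (Wu u v H), dot_lin2 in E.
    destruct (Hnu u v H) as [N1 [N2 N3]]. rewrite N1, N2 in E. lra. }
  assert (K6 : forall u v, U (u, v) -> dot (Pv nu u v) (xi u v) = 0).
  { intros u v H. 
    pose proof (diff_v U HU nu xi (fun _ _ => 1) u v Snu Sxi (fun a b Hab => proj2 (proj2 (Hnu a b Hab))) H) as E.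
    rewrite pv_c in E. rewrite (Wv u v H), dot_lin2 in E.
    destruct (Hnu u v H) as [N1 [N2 N3]]. rewrite N1, N2 in E. lra. }
  assert (K7 : forall u v, U (u, v) -> dot (Pu (Pu nu) u v) (xi u v) = - (b11 u v * rho u v)).
  { intros u v H.
    pose proof (diff_u U HU (Pu nu) xi (fun _ _ => 0) u v SN1 Sxi K5 H) as E.
    rewrite pu_c in E. rewrite (Wu u v H), dot_lin2, K1, K3 in E by exact H. lra. }
  assert (K8 : forall u v, U (u, v) -> dot (Pv (Pv nu) u v) (xi u v) = - (b22 u v * rho u v)).
  { intros u v H.
    pose proof (diff_v U HU (Pv nu) xi (fun _ _ => 0) u v SN2 Sxi K6 H) as E.
    rewrite pv_c in E. rewrite (Wv u v H), dot_lin2, K2, K4 in E by exact H. lra. }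
  assert (K9 : forall u v, U (u, v) -> dot (Pv (Pu nu) u v) (xi u v) = - (b12 u v * rho u v)).
  { intros u v H.
    pose proof (diff_v U HU (Pu nu) xi (fun _ _ => 0) u v SN1 Sxi K5 H) as E.
    rewrite pv_c in E. rewrite (Wv u v H), dot_lin2, K1, K3 in E by exact H. lra. }
  assert (Srho : Sm U rho).
  { apply (Sm_ext U HU (fun a b => dot (nu a b) (Pu (Pu f) a b))).
    - intros u v H. destruct (Gu u v H) as [a [b G]]. rewrite G, dot_lin3.
      destruct (Hnu u v H) as [N1 [N2 N3]]. rewrite N1, N2, N3. ring.
    - apply Sm_dot; auto. }
  assert (SinvD : Sm U (fun a b => / det3 (Pu f a b) (Pv f a b) (xi a b))) by (apply Sm_inv; auto).
  assert (Sb11 : Sm U b11).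
  { apply (Sm_ext U HU (fun a b => - dot (Pu xi a b) (cross (Pv f a b) (xi a b)) * / det3 (Pu f a b) (Pv f a b) (xi a b))).
    - intros u v H. rewrite (Wu u v H). symmetry. apply coef1. auto.
    - apply Sm_mult; auto. apply Sm_opp; auto. apply (Sm_dot U HU (Pu xi) (fun a b => cross (Pv f a b) (xi a b))); auto.
      apply Sm3_cross; auto. }
  assert (Sb12 : Sm U b12).
  { apply (Sm_ext U HU (fun a b => - dot (Pv xi a b) (cross (Pv f a b) (xi a b)) * / det3 (Pu f a b) (Pv f a b) (xi a b))).
    - intros u v H. rewrite (Wv u v H). symmetry. apply coef1. auto.
    - apply Sm_mult; auto. apply Sm_opp; auto. apply (Sm_dot U HU (Pv xi) (fun a b => cross (Pv f a b) (xi a b))); auto.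
      apply Sm3_cross; auto. }
  assert (Sb22 : Sm U b22).
  { apply (Sm_ext U HU (fun a b => - dot (Pv xi a b) (cross (xi a b) (Pu f a b)) * / det3 (Pu f a b) (Pv f a b) (xi a b))).
    - intros u v H. rewrite (Wv u v H). symmetry. apply coef2. auto.
    - apply Sm_mult; auto. apply Sm_opp; auto. apply (Sm_dot U HU (Pv xi) (fun a b => cross (xi a b) (Pu f a b))); auto.
      apply Sm3_cross; auto. }
  assert (L1 : eqU U (pu p) (fun a b => dot (Pu nu a b) (vsub (f a b) q0))).
  { intros u v H. unfold p. rewrite (pu_dot U nu (fun a b => vsub (f a b) q0) Snu SF u v H).
    rewrite (Pu_sub_const U f q0 u v Sf H). rewrite (proj1 (Hnu u v H)). ring. }
  assert (L2 : eqU U (pv p) (fun a b => dot (Pv nu a b) (vsub (f a b) q0))).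
  { intros u v H. unfold p. rewrite (pv_dot U nu (fun a b => vsub (f a b) q0) Snu SF u v H).
    rewrite (Pv_sub_const U f q0 u v Sf H). rewrite (proj1 (proj2 (Hnu u v H))). ring. }
  assert (L3 : eqU U (pu (pu p)) (fun a b => dot (Pu (Pu nu) a b) (vsub (f a b) q0) - rho a b)).
  { intros u v H. rewrite (pu_ext U _ _ HU L1 u v H).
    rewrite (pu_dot U (Pu nu) (fun a b => vsub (f a b) q0) SN1 SF u v H).
    rewrite (Pu_sub_const U f q0 u v Sf H), (K1 u v H). ring. }
  assert (L4 : eqU U (pv (pv p)) (fun a b => dot (Pv (Pv nu) a b) (vsub (f a b) q0) - rho a b)).
  { intros u v H. rewrite (pv_ext U _ _ HU L2 u v H).
    rewrite (pv_dot U (Pv nu) (fun a b => vsub (f a b) q0) SN2 SF u v H).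
    rewrite (Pv_sub_const U f q0 u v Sf H), (K4 u v H). ring. }
  assert (L5 : eqU U (pv (pu p)) (fun a b => dot (Pv (Pu nu) a b) (vsub (f a b) q0))).
  { intros u v H. rewrite (pv_ext U _ _ HU L1 u v H).
    rewrite (pv_dot U (Pu nu) (fun a b => vsub (f a b) q0) SN1 SF u v H).
    rewrite (Pv_sub_const U f q0 u v Sf H), (K3 u v H). ring. }
  assert (L6 : eqU U P1 (fun a b => dot (Pu (Pu nu) a b) (vsub (f a b) q0) - dot (Pv (Pv nu) a b) (vsub (f a b) q0))).
  { intros u v H. unfold P1. rewrite (L3 u v H), (L4 u v H). ring. }
  assert (L7 : eqU U P2 (fun a b => 2 * dot (Pv (Pu nu) a b) (vsub (f a b) q0))).
  { intros u v H. unfold P2. rewrite (L5 u v H). ring. }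
  assert (Hd0 : delta0 = rho 0 0).
  { unfold delta0. rewrite gram. destruct (Hnu 0 0 H0) as [N1 [N2 N3]].
    rewrite N1, N2, N3, (K1 0 0 H0), (K2 0 0 H0), (K3 0 0 H0), (K4 0 0 H0), (K5 0 0 H0), (K6 0 0 H0).
    specialize (Hrho 0 0 H0). field. lra. }
  assert (hF0 : forall X, dot X (vsub (f 0 0) q0) = - / b11 0 0 * dot X (xi 0 0)).
  { intros X. exact (dot_F0 X (f 0 0) (xi 0 0) (b11 0 0) lam_ne). }
  assert (Hc : c = / b11 0 0 * rho 0 0) by (unfold c; rewrite Hd0; reflexivity).
  clearbody c. clear delta0 Hd0.
  assert (Wu0 : forall X, dot X (Pu xi 0 0) = - b11 0 0 * dot X (Pu f 0 0)).
  { intros X. rewrite (Wu 0 0 H0), dot_lin2, b21_0. ring. }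
  assert (Wv0 : forall X, dot X (Pv xi 0 0) = - b11 0 0 * dot X (Pv f 0 0)).
  { intros X. rewrite (Wv 0 0 H0), dot_lin2, b12_0, b11_22. ring. }
  assert (SD11 : Sm U (fun a b => dot (Pu (Pu nu) a b) (vsub (f a b) q0))) by (apply Sm_dot; auto).
  assert (SD22 : Sm U (fun a b => dot (Pv (Pv nu) a b) (vsub (f a b) q0))) by (apply Sm_dot; auto).
  assert (SD12 : Sm U (fun a b => dot (Pv (Pu nu) a b) (vsub (f a b) q0))) by (apply Sm_dot; auto).
  split; [|split; [|split; [|split; [|split]]]].
  - rewrite (L6 0 0 H0), !hF0, (K7 0 0 H0), (K8 0 0 H0), Hc. unfold B1. rewrite <- b11_22. field. exact lam_ne.
  - rewrite (L7 0 0 H0), !hF0, (K9 0 0 H0), Hc. unfold B2. field. exact lam_ne.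
  - rewrite (pu_ext U _ _ HU L6 0 0 H0).
    rewrite (pu_minusf U _ _ 0 0 SD11 SD22 H0).
    rewrite (pu_dot U (Pu (Pu nu)) _ SN11 SF 0 0 H0), (pu_dot U (Pv (Pv nu)) _ SN22 SF 0 0 H0).
    rewrite (Pu_sub_const U f q0 0 0 Sf H0), !hF0.
    pose proof (diff_u U HU (Pu (Pu nu)) xi _ 0 0 SN11 Sxi K7 H0) as R1.
    pose proof (diff_u U HU (Pv (Pv nu)) xi _ 0 0 SN22 Sxi K8 H0) as R2.
    rewrite pu_oppf, (pu_multf U b11 rho 0 0 Sb11 Srho H0), Wu0 in R1.
    rewrite pu_oppf, (pu_multf U b22 rho 0 0 Sb22 Srho H0), Wu0 in R2.
    unfold B1. rewrite (pu_minusf U b11 b22 0 0 Sb11 Sb22 H0), Hc.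
    rewrite <- b11_22 in R2.
    apply solveX in R1. apply solveX in R2. rewrite R1, R2. field. exact lam_ne.
  - rewrite (pv_ext U _ _ HU L6 0 0 H0).
    rewrite (pv_minusf U _ _ 0 0 SD11 SD22 H0).
    rewrite (pv_dot U (Pu (Pu nu)) _ SN11 SF 0 0 H0), (pv_dot U (Pv (Pv nu)) _ SN22 SF 0 0 H0).
    rewrite (Pv_sub_const U f q0 0 0 Sf H0), !hF0.
    pose proof (diff_v U HU (Pu (Pu nu)) xi _ 0 0 SN11 Sxi K7 H0) as R1.
    pose proof (diff_v U HU (Pv (Pv nu)) xi _ 0 0 SN22 Sxi K8 H0) as R2.
    rewrite pv_oppf, (pv_multf U b11 rho 0 0 Sb11 Srho H0), Wv0 in R1.
    rewrite pv_oppf, (pv_multf U b22 rho 0 0 Sb22 Srho H0), Wv0 in R2.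
    unfold B1. rewrite (pv_minusf U b11 b22 0 0 Sb11 Sb22 H0), Hc.
    rewrite <- b11_22 in R2.
    apply solveX in R1. apply solveX in R2. rewrite R1, R2. field. exact lam_ne.
  - rewrite (pu_ext U _ _ HU L7 0 0 H0), pu_scalf.
    rewrite (pu_dot U (Pv (Pu nu)) _ SN12 SF 0 0 H0).
    rewrite (Pu_sub_const U f q0 0 0 Sf H0), !hF0.
    pose proof (diff_u U HU (Pv (Pu nu)) xi _ 0 0 SN12 Sxi K9 H0) as R1.
    rewrite pu_oppf, (pu_multf U b12 rho 0 0 Sb12 Srho H0), Wu0, b12_0 in R1.
    unfold B2. rewrite pu_scalf, Hc.
    apply solveX in R1. rewrite R1. field. exact lam_ne.
  - rewrite (pv_ext U _ _ HU L7 0 0 H0), pv_scalf.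
    rewrite (pv_dot U (Pv (Pu nu)) _ SN12 SF 0 0 H0).
    rewrite (Pv_sub_const U f q0 0 0 Sf H0), !hF0.
    pose proof (diff_v U HU (Pv (Pu nu)) xi _ 0 0 SN12 Sxi K9 H0) as R1.
    rewrite pv_oppf, (pv_multf U b12 rho 0 0 Sb12 Srho H0), Wv0, b12_0 in R1.
    unfold B2. rewrite pv_scalf, Hc.
    apply solveX in R1. rewrite R1. field. exact lam_ne.
Qed.
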